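(* Let $p=p(n)\in[0,1]$, let $\omega=\omega(n)\to\infty$ as $n\to\infty$, and set $z=z(n,\omega):=\omega\sqrt{n}$. Suppose there is a function $\Gamma=\Gamma(z,n,p)$ such that, with high probability, $$\max_{Z\subseteq[n]:\,|Z|\le z}\chi\big(G_{n,p}[Z]\big)\le\Gamma.$$ Then with high probability $|\chi(G_{n,p})-\Lambda|\le\Gamma$, where $\Lambda=\Lambda(n,p)$ is the smallest integer with $\Pr(\chi(G_{n,p})\le\Lambda)\ge1/2$.
   Context: $G_{n,p}$ denotes the binomial random graph on vertex set $[n]$ in which each pair of vertices is an edge independently with probability $p$; $G[Z]$ is the subgraph induced by the vertex set $Z$; $\chi$ denotes the chromatic number. ''With high probability'' means with probability tending to $1$ as $n\to\infty$. *)

(* Defs.v *)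
From HB Require Import structures.
From mathcomp Require Import all_boot all_order all_algebra.
From mathcomp Require Import all_classical all_reals all_analysis.
Set Implicit Arguments. Unset Strict Implicit. Unset Printing Implicit Defensive.
Import Order.TTheory GRing.Theory Num.Theory.
Import numFieldNormedType.Exports.
Local Open Scope ring_scope.

(* A simple graph on vertex set 'I_n ([n]) is a set E of 2-element subsets. *)
Definition pairs (n : nat) : {set {set 'I_n}} := [set e : {set 'I_n} | #|e| == 2%N].

Definition proper_on n k (E : {set {set 'I_n}}) (Z : {set 'I_n}) (f : {ffun 'I_n -> 'I_k}) : bool :=
  [forall u, forall v, [&& u \in Z, v \in Z & [set u; v] \in E] ==> (f u != f v)].

Definition colorable n (E : {set {set 'I_n}}) (Z : {set 'I_n}) (k : nat) : bool :=
  [exists f : {ffun 'I_n -> 'I_k}, proper_on E Z f].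

(* chromatic number of G[Z]: least k colourable (always <= n, witnessed by the identity) *)
Definition chi n (E : {set {set 'I_n}}) (Z : {set 'I_n}) : nat :=
  \big[minn/n]_(k < n.+1 | colorable E Z k) k.

(* Probability of an event A under G_{n,p}: each pair is an edge independently w.p. p *)
Definition Pr (R : realType) (n : nat) (p : R) (A : pred {set {set 'I_n}}) : R :=
  \sum_(E in powerset (pairs n))
     (p ^+ #|E| * (1 - p) ^+ (#|pairs n| - #|E|)) * (A E)%:R.

Local Open Scope classical_set_scope.
Definition whp (R : realType) (p : nat -> R) (A : forall n, pred {set {set 'I_n}}) : Prop :=
  (fun n => Pr (p n) (A n)) @ \oo --> (1 : R).

(* Main.v *)
Require Import Defs.
From HB Require Import structures.
From mathcomp Require Import all_boot all_order all_algebra.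
From mathcomp Require Import all_classical all_reals all_analysis.
From mathcomp Require Import ring lra zify.
Set Implicit Arguments. Unset Strict Implicit. Unset Printing Implicit Defensive.
Import Order.TTheory GRing.Theory Num.Theory.
Import numFieldNormedType.Exports.
Local Open Scope ring_scope.

Section Avg.
Variables (R : realType) (T : finType) (p : R).
Hypothesis hp : 0 <= p <= 1.

Definition av (x : T) (phi : {set T} -> R) : {set T} -> R :=
  fun E => p * phi (x |: E) + (1 - p) * phi (E :\ x).
Definition avs (s : seq T) (phi : {set T} -> R) := foldr av phi s.
Definition indep (x : T) (chi : {set T} -> R) := forall E, chi (x |: E) = chi (E :\ x).

Lemma setU1_id (x : T) E : x |: (x |: E) = x |: E.
Proof. by apply/setP=> y; rewrite !inE; case: (y == x). Qed.
Lemma setU1D1 (x : T) E : x |: (E :\ x) = x |: E.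
Proof. by apply/setP=> y; rewrite !inE; case: (y == x). Qed.
Lemma setD1U1 (x : T) E : (x |: E) :\ x = E :\ x.
Proof. by apply/setP=> y; rewrite !inE; case: (y == x). Qed.
Lemma setD1_id (x : T) E : (E :\ x) :\ x = E :\ x.
Proof. by apply/setP=> y; rewrite !inE; case: (y == x). Qed.
Lemma setU1C (x y : T) E : x |: (y |: E) = y |: (x |: E).
Proof. by apply/setP=> z; rewrite !inE; case: (z == x); case: (z == y). Qed.
Lemma setD1C (x y : T) E : (E :\ x) :\ y = (E :\ y) :\ x.
Proof. by apply/setP=> z; rewrite !inE; case: (z == x); case: (z == y). Qed.
Lemma setU1D1C (x y : T) E : x != y -> (x |: E) :\ y = x |: (E :\ y).
Proof.
move=> nxy; apply/setP=> z; rewrite !inE; case: eqP => [->|] //=.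
by rewrite eq_sym (negbTE nxy).
Qed.
Lemma setD1_notin (x : T) (E : {set T}) : x \notin E -> E :\ x = E.
Proof.
move=> xE; apply/setP=> z; rewrite !inE; case: eqP => [->|] //=.
by rewrite (negbTE xE).
Qed.

Lemma indepE x chi E : indep x chi -> chi (x |: E) = chi E /\ chi (E :\ x) = chi E.
Proof.
move=> h; case: (boolP (x \in E)) => xE.
  have e : E = x |: (E :\ x) by rewrite finset.setD1K.
  by split; rewrite {2}e setU1D1 // -h.
by rewrite h (setD1_notin xE).
Qed.

Lemma av_indep x phi : indep x (av x phi).
Proof. by move=> E; rewrite /av setU1_id setD1U1 setU1D1 setD1_id. Qed.

Lemma av_id x chi : indep x chi -> av x chi = chi.
Proof.
move=> h; apply/funext=> E; rewrite /av.
have [-> ->] := indepE E h; ring.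
Qed.

Lemma indep_av x y chi : indep y chi -> indep y (av x chi).
Proof.
move=> h; case: (eqVneq x y) => [->|nxy]; first exact: av_indep.
move=> E; rewrite /av.
have nyx : y != x by rewrite eq_sym.
have e1 : x |: (y |: E) = y |: (x |: E) by rewrite setU1C.
have e2 : x |: (E :\ y) = (x |: E) :\ y by rewrite setU1D1C.
have e3 : (y |: E) :\ x = y |: (E :\ x) by rewrite setU1D1C.
have e4 : (E :\ y) :\ x = (E :\ x) :\ y by rewrite setD1C.
by rewrite e1 e2 e3 e4 !h.
Qed.

Lemma av_comm x y phi : av x (av y phi) = av y (av x phi).
Proof.
apply/funext=> E; case: (eqVneq x y) => [->//|nxy]; rewrite /av.
have nyx : y != x by rewrite eq_sym.
have e1 : y |: (x |: E) = x |: (y |: E) by rewrite setU1C.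
have e2 : (x |: E) :\ y = x |: (E :\ y) by rewrite setU1D1C.
have e3 : y |: (E :\ x) = (y |: E) :\ x by rewrite setU1D1C.
have e4 : (E :\ x) :\ y = (E :\ y) :\ x by rewrite setD1C.
rewrite e1 e2 e3 e4; ring.
Qed.

Lemma avs_av x s phi : avs s (av x phi) = av x (avs s phi).
Proof. by elim: s => [//|y s IH] /=; rewrite IH av_comm. Qed.

Lemma avs_avs s t phi : avs s (avs t phi) = avs t (avs s phi).
Proof. by elim: t => [//|x t IH] /=; rewrite avs_av IH. Qed.

Lemma indep_avs x s phi : x \in s -> indep x (avs s phi).
Proof.
elim: s => [//|y s IH]; rewrite inE => /orP [/eqP ->|xs] /=.
  exact: av_indep.
exact/indep_av/IH.
Qed.

Lemma indep_avs' y s chi : indep y chi -> indep y (avs s chi).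
Proof. by move=> h; elim: s => [//|x s IH] /=; exact: indep_av. Qed.

Lemma avs_absorb x s phi : x \in s -> av x (avs s phi) = avs s phi.
Proof. by move=> xs; apply: av_id; exact: indep_avs. Qed.

Lemma avs_sub s t phi : {subset t <= s} -> avs s (avs t phi) = avs s phi.
Proof.
elim: t => [//|x t IH] sub /=.
rewrite avs_av IH ?avs_absorb //; first by apply: sub; rewrite inE eqxx.
by move=> y yt; apply: sub; rewrite inE yt orbT.
Qed.

Lemma avs_eq s s' phi : s =i s' -> avs s phi = avs s' phi.
Proof.
move=> e.
rewrite -[LHS](@avs_sub s s'); last by move=> y; rewrite e.
by rewrite avs_avs avs_sub // => y; rewrite e.
Qed.

Lemma av_lin x a b phi psi :
  av x (fun E => a * phi E + b * psi E) = fun E => a * av x phi E + b * av x psi E.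
Proof. by apply/funext=> E; rewrite /av; ring. Qed.

Lemma avs_lin s a b phi psi :
  avs s (fun E => a * phi E + b * psi E) = fun E => a * avs s phi E + b * avs s psi E.
Proof. by elim: s => [//|x s IH] /=; rewrite IH av_lin. Qed.

Lemma av_const x c : av x (fun _ => c) = fun _ => c.
Proof. by apply/funext=> E; rewrite /av; ring. Qed.

Lemma avs_const s c : avs s (fun _ => c) = fun _ => c.
Proof. by elim: s => [//|x s IH] /=; rewrite IH av_const. Qed.

Lemma av_mul x phi chi : indep x chi ->
  av x (fun E => phi E * chi E) = fun E => av x phi E * chi E.
Proof.
move=> h; apply/funext=> E; rewrite /av.
have [-> ->] := indepE E h; ring.
Qed.

Lemma avs_mul s phi chi : (forall x, x \in s -> indep x chi) ->
  avs s (fun E => phi E * chi E) = fun E => avs s phi E * chi E.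
Proof.
elim: s => [//|x s IH] h /=.
rewrite IH ?av_mul //; first by apply: h; rewrite inE eqxx.
by move=> y ys; apply: h; rewrite inE ys orbT.
Qed.

Lemma conv_bound lo hi a b : lo <= a <= hi -> lo <= b <= hi ->
  lo <= p * a + (1 - p) * b <= hi.
Proof.
case/andP: hp => p0 p1 /andP [h1 h2] /andP [h3 h4].
apply/andP; split; nra.
Qed.

Lemma setD_agree (A B C : {set T}) x S : A :\: S = B :\: S ->
  B :\: (x |: S) = C :\: (x |: S) -> A :\: (x |: S) = C :\: (x |: S).
Proof.
move=> /setP h1 /setP h2; apply/setP=> z; move: (h1 z) (h2 z); rewrite !inE.
by case: (z == x); case: (z \in S) => //= -> ->.
Qed.

Lemma avs_bound lo hi s f E :
  (forall E', E' :\: [set x in s] = E :\: [set x in s] -> lo <= f E' <= hi) ->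
  lo <= avs s f E <= hi.
Proof.
elim: s E => [|x s IH] E h /=.
  by apply: h.
have eS : [set y in x :: s] = x |: [set y in s].
  by apply/setP=> z; rewrite !inE.
rewrite /av; apply: conv_bound; apply: IH => E' hE'; apply: h; rewrite eS;
  apply: setD_agree hE' _; apply/setP=> z; rewrite !inE;
  by case: (z == x); case: (z \in E).
Qed.

Lemma sum_powersetU1 (x : T) (S : {set T}) (g : {set T} -> R) : x \notin S ->
  \sum_(F in powerset (x |: S)) g F =
  \sum_(F in powerset S) g F + \sum_(F in powerset S) g (x |: F).
Proof.
move=> xS; rewrite (bigID [pred F : {set T} | x \in F]) /= addrC; congr (_ + _).
  apply: eq_bigl => F; rewrite !powersetE; apply/idP/idP.
    case/andP=> sub nx; apply/fintype.subsetP=> y yF.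
    have := fintype.subsetP sub y yF; rewrite !inE => /orP [/eqP ey|//].
    by move: yF; rewrite ey (negbTE nx).
  move=> sub; apply/andP; split.
    by apply: (fintype.subset_trans sub); apply/fintype.subsetP=> y yS; rewrite inE yS orbT.
  by apply/negP=> xF; move: (fintype.subsetP sub x xF); rewrite (negbTE xS).
rewrite (reindex_onto (fun F => x |: F) (fun F => F :\ x)) /=; last first.
  by move=> F /andP [_ xF]; rewrite finset.setD1K.
apply: eq_bigl => F; rewrite !powersetE setU11 andbT setD1U1; apply/idP/idP.
  case/andP=> sub /eqP e; apply/fintype.subsetP=> y yF.
  have := fintype.subsetP sub y; rewrite !inE yF orbT => /(_ isT) /orP [/eqP ey|//].
  by move: yF; rewrite -e ey !inE eqxx.
move=> sub; apply/andP; split.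
  apply/fintype.subsetP=> y; rewrite !inE => /orP [->//|yF]; by rewrite (fintype.subsetP sub y yF) orbT.
have xF : x \notin F by apply/negP=> xF; move: (fintype.subsetP sub x xF); rewrite (negbTE xS).
by rewrite setD1_notin.
Qed.

Lemma avs_sum s phi E : uniq s ->
  avs s phi E = \sum_(F in powerset [set x in s])
     p ^+ #|F| * (1 - p) ^+ (size s - #|F|) * phi ((E :\: [set x in s]) :|: F).
Proof.
elim: s E => [|x s IH] E /=.
  move=> _; rewrite (_ : [set x in [::]] = finset.set0); last by apply/setP=> z; rewrite !inE.
  rewrite powerset0 big_set1 cards0 !expr0 !mul1r finset.setD0 finset.setU0 //.
case/andP=> xs us.
have eS : [set y in x :: s] = x |: [set y in s] by apply/setP=> z; rewrite !inE.
have xS : x \notin [set y in s] by rewrite inE.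
rewrite eS sum_powersetU1 // /av !IH // addrC !mulr_sumr; congr (_ + _).
  apply: eq_bigr => F; rewrite powersetE => sub.
  have cF : (#|F| <= size s)%N.
    by have := subset_leq_card sub; rewrite cardsE (card_uniqP us).
  rewrite subSn // exprS.
  have -> : (E :\ x) :\: [set y in s] :|: F = E :\: (x |: [set y in s]) :|: F.
    by apply/setP=> z; rewrite !inE; case: (z == x); case: (z \in s).
  move: (p ^+ #|F|) ((1 - p) ^+ (size s - #|F|)) => a b; ring.
apply: eq_bigr => F; rewrite powersetE => sub.
have xF : x \notin F by apply/negP=> xF; move: (fintype.subsetP sub x xF); rewrite (negbTE xS).
rewrite cardsU1 xF add1n subSS exprS.
have -> : (x |: E) :\: [set y in s] :|: F = E :\: (x |: [set y in s]) :|: (x |: F).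
  by apply/setP=> z; rewrite !inE; case: (eqVneq z x) => [->|]; rewrite ?xs //= orbT.
ring.
Qed.
End Avg.

Lemma bigmin_le (I : finType) (P : pred I) (F : I -> nat) m j :
  P j -> (\big[minn/m]_(i | P i) F i <= F j)%N.
Proof.
move=> Pj; move: (mem_index_enum j); elim: (index_enum I) => // x r IH.
rewrite inE big_cons => /orP [/eqP <-|jr]; first by rewrite Pj geq_minl.
by case: ifP => _; rewrite ?geq_min IH ?orbT.
Qed.

Section Chi.
Variable n : nat.
Local Notation P := (pairs n).
Implicit Types (E : {set {set 'I_n}}) (Z A B : {set 'I_n}).

Lemma properP k E Z (f : {ffun 'I_n -> 'I_k}) :
  reflect (forall u v, u \in Z -> v \in Z -> [set u; v] \in E -> f u != f v)
          (proper_on E Z f).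
Proof.
apply: (iffP idP).
  by move=> /forallP h u v uZ vZ uvE; move: (h u) => /forallP /(_ v) /implyP; apply; apply/and3P.
move=> h; apply/forallP => u; apply/forallP => v; apply/implyP => /and3P [uZ vZ uvE].
exact: h.
Qed.

Lemma col_gt0 k E Z : colorable E Z k -> (0 < n)%N -> (0 < k)%N.
Proof.
case/existsP => f _ n0.
by have := ltn_ord (f (Ordinal n0)); case: k f => // f'.
Qed.

Lemma col_mono_k k k' E Z : (k <= k')%N -> colorable E Z k -> colorable E Z k'.
Proof.
move=> kk /existsP [f /properP h]; apply/existsP.
exists [ffun u => widen_ord kk (f u)]; apply/properP => u v uZ vZ uvE.
rewrite !ffunE; apply/eqP => /(congr1 val) /= /val_inj e.
by move: (h u v uZ vZ uvE); rewrite e eqxx.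
Qed.

Lemma col_mono_Z k E Z Z' : Z' \subset Z -> colorable E Z k -> colorable E Z' k.
Proof.
move=> sub /existsP [f /properP h]; apply/existsP; exists f.
apply/properP => u v uZ vZ uvE; apply: h => //; exact: (fintype.subsetP sub).
Qed.

Lemma col_union a b E A B : colorable E A a -> colorable E B b ->
  colorable E (A :|: B) (a + b).
Proof.
move=> /existsP [f1 /properP h1] /existsP [f2 /properP h2]; apply/existsP.
exists [ffun u => if u \in A then lshift b (f1 u) else rshift a (f2 u)].
apply/properP => u v; rewrite !inE => uZ vZ uvE; rewrite !ffunE.
case: (boolP (u \in A)) => uA; case: (boolP (v \in A)) => vA.
- apply/eqP => /(congr1 val) /= /val_inj e.
  by move: (h1 u v uA vA uvE); rewrite e eqxx.
- apply/eqP => /(congr1 val) /= e; have := ltn_ord (f1 u); rewrite e; lia.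
- apply/eqP => /(congr1 val) /= e; have := ltn_ord (f1 v); rewrite -e; lia.
- move: uZ vZ; rewrite (negbTE uA) (negbTE vA) /= => uB vB.
  apply/eqP => /(congr1 val) /= /eqP; rewrite eqn_add2l => /eqP /val_inj e.
  by move: (h2 u v uB vB uvE); rewrite e eqxx.
Qed.

Lemma col_n E Z : E \subset P -> colorable E Z n.
Proof.
move=> sub; apply/existsP; exists [ffun u => u]; apply/properP => u v _ _ uvE.
rewrite !ffunE; have := fintype.subsetP sub _ uvE; rewrite inE cards2.
by case: (u != v).
Qed.

Lemma chi_col E Z : E \subset P -> colorable E Z (chi E Z).
Proof.
move=> sub; rewrite /chi; apply: (big_ind (fun x => colorable E Z x)).
- exact: col_n.
- by move=> x y hx hy; rewrite /minn; case: ifP.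
- by [].
Qed.

Lemma chi_le_n E Z : (chi E Z <= n)%N.
Proof.
rewrite /chi; apply: (big_ind (fun x => x <= n)%N) => //.
  by move=> x y hx hy; rewrite geq_min hx.
by move=> i _; rewrite -ltnS.
Qed.

Lemma chi_le k E Z : colorable E Z k -> (chi E Z <= k)%N.
Proof.
move=> hk; case: (leqP k n) => kn; last exact: (leq_trans (chi_le_n E Z) (ltnW kn)).
have kn' : (k < n.+1)%N by [].
by rewrite /chi (@bigmin_le _ _ (fun i : 'I_n.+1 => nat_of_ord i) n (Ordinal kn')).
Qed.

Lemma chi_ge1 E Z : (0 < n)%N -> (0 < chi E Z)%N.
Proof.
move=> n0; rewrite /chi; apply: (big_ind (fun x => 0 < x)%N) => //.
  by move=> x y hx hy; rewrite leq_min hx.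
by move=> i /col_gt0; apply.
Qed.

Definition Y k E := \big[minn/n]_(Z : {set 'I_n} | colorable E (~: Z) k) #|Z|.

Lemma Y_le k E Z : colorable E (~: Z) k -> (Y k E <= #|Z|)%N.
Proof. by move=> h; rewrite /Y (bigmin_le (fun Z : {set 'I_n} => #|Z|) n h). Qed.

Lemma Y_le_n k E : (Y k E <= n)%N.
Proof.
rewrite /Y; apply: (big_ind (fun x => x <= n)%N) => //.
  by move=> x y hx hy; rewrite geq_min hx.
by move=> Z _; rewrite -[X in (_ <= X)%N]card_ord; exact: max_card.
Qed.

Lemma Y_wit k E : (0 < k)%N -> exists Z, colorable E (~: Z) k /\ #|Z| = Y k E.
Proof.
move=> k0; rewrite /Y; apply: (big_ind (fun x => exists Z, colorable E (~: Z) k /\ #|Z| = x)).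
- exists [set: 'I_n]%SET; split; last by rewrite cardsT card_ord.
  apply/existsP; exists [ffun _ => Ordinal k0]; apply/properP => u v; by rewrite !inE.
- by move=> x y hx hy; rewrite /minn; case: ifP.
- by move=> Z hZ; exists Z.
Qed.

Lemma Y_lip k (v : 'I_n) E E' :
  (forall e, (e \in E) != (e \in E') -> v \in e) -> (Y k E' <= (Y k E).+1)%N.
Proof.
move=> hd; case: (posnP k) => [k0|k0].
  case: (posnP n) => [n0|n0]; first by have := Y_le_n k E'; rewrite n0 leqn0 => /eqP ->.
  have -> : Y k E = n.
    rewrite /Y big_pred0 // => Z; by apply/negbTE/negP => /col_gt0 /(_ n0); rewrite k0.
  by apply: leqW; exact: Y_le_n.
have [Z [hZ <-]] := Y_wit E k0.
apply: (@leq_trans #|v |: Z|); last by rewrite cardsU1; case: (v \in Z).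
apply: Y_le; move: hZ => /existsP [f /properP h]; apply/existsP; exists f.
apply/properP => u w; rewrite !inE !negb_or => /andP [uv uZ] /andP [wv wZ] uwE.
apply: h; rewrite ?inE // .
case: (eqVneq ([set u; w] \in E) ([set u; w] \in E')) => [->//|/hd].
by rewrite !inE => /orP [] /eqP e; [move: uv | move: wv]; rewrite e eqxx.
Qed.

End Chi.

Lemma inv_sq_small (R : realType) (d x : R) : 0 < d -> 1 + d^-1 < x -> x ^-2 < d.
Proof.
move=> d0 h; have di0 : 0 < d^-1 by rewrite invr_gt0.
have x1 : 1 < x by lra.
have hx2 : d^-1 < x ^+ 2 by rewrite expr2; nra.
rewrite -[d in _ < d]invrK ltf_pV2 // posrE ?invr_gt0 //.
by rewrite exprn_gt0 //; lra.
Qed.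

Section Graph.
Variables (R : realType) (n : nat) (p : R).
Hypothesis hp : 0 <= p <= 1.
Local Notation P := (pairs n).

Definition EE (phi : {set {set 'I_n}} -> R) :=
  \sum_(E in powerset P) (p ^+ #|E| * (1 - p) ^+ (#|P| - #|E|)) * phi E.

Lemma Pr_EE (A : pred {set {set 'I_n}}) : Pr p A = EE (fun E => (A E)%:R).
Proof. by []. Qed.

Lemma EE_avs phi : EE phi = avs p (enum P) phi finset.set0.
Proof.
rewrite avs_sum ?enum_uniq // set_enum -cardE /EE.
by apply: eq_bigr => F _; rewrite finset.set0D finset.set0U.
Qed.

Lemma EE_lin a b phi psi :
  EE (fun E => a * phi E + b * psi E) = a * EE phi + b * EE psi.
Proof. by rewrite !EE_avs avs_lin. Qed.

Lemma EE_const c : EE (fun _ => c) = c.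
Proof. by rewrite EE_avs avs_const. Qed.

Lemma EE_le (phi psi : {set {set 'I_n}} -> R) :
  (forall E : {set {set 'I_n}}, E \subset P -> phi E <= psi E) -> EE phi <= EE psi.
Proof.
case/andP: hp => p0 p1 h; apply: ler_sum => E; rewrite powersetE => sub.
apply: ler_wpM2l; last exact: h.
by apply: mulr_ge0; apply: exprn_ge0; rewrite ?subr_ge0.
Qed.

Lemma EE_sub (S : {set {set 'I_n}}) phi : S \subset P ->
  EE (avs p (enum S) phi) = EE phi.
Proof.
move=> sub; rewrite !EE_avs avs_sub // => x; rewrite !mem_enum.
exact: (fintype.subsetP sub).
Qed.

Definition V (i : nat) : {set {set 'I_n}} := [set e in P | [forall j in e, (j < i)%N]].
Definition D (i : nat) := V i.+1 :\: V i.

Lemma V0 : V 0 = finset.set0.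
Proof.
apply/setP=> e; rewrite !inE; apply/negbTE/negP => /andP [].
move=> /eqP c /forall_inP h.
have : (0 < #|e|)%N by rewrite c.
by rewrite card_gt0 => /set0Pn [j /h].
Qed.

Lemma Vn : V n = P.
Proof.
apply/setP=> e; rewrite /V !inE andb_idr // => _; apply/forall_inP => j _; exact: ltn_ord.
Qed.

Lemma VS i : V i \subset V i.+1.
Proof.
apply/fintype.subsetP=> e; rewrite !inE => /andP [-> /forall_inP h].
by apply/forall_inP => j /h /ltnW.
Qed.

Lemma VP i : V i \subset P.
Proof. by apply/fintype.subsetP=> e; rewrite !inE => /andP []. Qed.

Lemma DP i : D i \subset P.
Proof. by apply/fintype.subsetP=> e; rewrite !inE => /andP [_ /andP []]. Qed.

Lemma D_vertex i e : e \in D i -> exists2 j : 'I_n, j \in e & val j = i.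
Proof.
rewrite /D /V !inE => /andP [h1 /andP [eP /forall_inP h2]].
move: h1; rewrite eP /= => /forall_inPn [j je hj].
exists j => //; have := h2 j je; move: hj; rewrite -leqNgt; lia.
Qed.

Lemma V_split i phi :
  avs p (enum (V i.+1)) phi = avs p (enum (D i)) (avs p (enum (V i)) phi).
Proof.
rewrite -[RHS]foldr_cat; apply: avs_eq => e; rewrite mem_cat !mem_enum /D finset.in_setD.
case: (boolP (e \in V i)) => h /=; rewrite ?orbF // (fintype.subsetP (VS i) e h) //.
Qed.


Lemma EE_add phi psi : EE (fun E => phi E + psi E) = EE phi + EE psi.
Proof.
have := EE_lin 1 1 phi psi; rewrite !mul1r => <-.
by congr EE; apply/funext=> E; rewrite !mul1r.
Qed.

Lemma EE_scale a phi : EE (fun E => a * phi E) = a * EE phi.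
Proof.
have := EE_lin a 0 phi phi; rewrite mul0r addr0 => <-.
by congr EE; apply/funext=> E; rewrite mul0r addr0.
Qed.

Lemma var_bound f : (forall i E E', E :\: D i = E' :\: D i -> f E' <= f E + 1) ->
  EE (fun E => (f E - EE f) ^+ 2) <= n%:R.
Proof.
move=> Lip.
pose g i := avs p (enum (V i)) f.
have step i : EE (fun E => g i E * g i E) - EE (fun E => g i.+1 E * g i.+1 E) <= 1.
  set h := g i.
  have eg : g i.+1 = avs p (enum (D i)) h by rewrite /g V_split.
  rewrite eg; set k := avs p (enum (D i)) h.
  have hk : EE (fun E => h E * k E) = EE (fun E => k E * k E).
    rewrite -(EE_sub (fun E => h E * k E) (DP i)) avs_mul //.
    by move=> x xs; exact: indep_avs.
  have bnd E : -1 <= h E - k E <= 1.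
    have e1 : (fun E => h E - k E) = avs p (enum (V i))
        (fun E => 1 * f E + (-1) * avs p (enum (D i)) f E).
      rewrite avs_lin /k /h /g avs_avs; apply/funext => E0; ring.
    move: (congr1 (fun F => F E) e1) => /= ->; apply: avs_bound => // E' _.
    have := @avs_bound _ _ p hp (f E' - 1) (f E' + 1) (enum (D i)) f E'.
    rewrite set_enum; case/(_ _)/andP.
      move=> E'' hE''; have := Lip i E' E'' (esym hE''); have := Lip i E'' E' hE''.
      by move=> *; apply/andP; split; lra.
    by move=> *; apply/andP; split; lra.
  have sq : EE (fun E => (h E - k E) ^+ 2) <= 1.
    apply: (@le_trans _ _ (EE (fun _ => 1))); last by rewrite EE_const.
    apply: EE_le => E _.
    by have /andP [? ?] := bnd E; nra.
  have : EE (fun E => (h E - k E) ^+ 2) =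
      EE (fun E => h E * h E) + (-2 * EE (fun E => h E * k E) + EE (fun E => k E * k E)).
    rewrite -EE_scale -!EE_add; congr EE; apply/funext => E; ring.
  rewrite hk; lra.
have tele m : EE (fun E => f E * f E) - EE (fun E => g m E * g m E) <= m%:R.
  elim: m => [|m IH].
    by rewrite /g V0 enum_set0 /= subrr.
  by have := step m; rewrite -natr1; lra.
have gn : g n = avs p (enum P) f by rewrite /g Vn.
have e1 : EE (fun E => g n E * g n E) = EE f ^+ 2.
  rewrite EE_avs avs_mul; last by move=> x xs; rewrite gn; exact: indep_avs.
  by rewrite gn avs_sub // -EE_avs expr2.
have e2 : EE (fun E => (f E - EE f) ^+ 2) = EE (fun E => f E * f E) - EE f ^+ 2.
  rewrite (_ : (fun E => _) = fun E => f E * f E + ((-2 * EE f) * f E + EE f ^+ 2)).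
    by rewrite !EE_add EE_scale EE_const; ring.
  by apply/funext => E; ring.
by have := tele n; rewrite e1 e2.
Qed.

Lemma EE_ext (phi psi : {set {set 'I_n}} -> R) : (forall E : {set {set 'I_n}}, E \subset P -> phi E = psi E) -> EE phi = EE psi.
Proof. by move=> h; apply: eq_bigr => E; rewrite powersetE => /h ->. Qed.

Lemma Pr_ext (A B : pred {set {set 'I_n}}) :
  (forall E : {set {set 'I_n}}, E \subset P -> A E = B E) -> Pr p A = Pr p B.
Proof. by move=> h; rewrite !Pr_EE; apply: EE_ext => E /h ->. Qed.

Lemma Pr_le (A B : pred {set {set 'I_n}}) :
  (forall E : {set {set 'I_n}}, E \subset P -> A E -> B E) -> Pr p A <= Pr p B.
Proof.
move=> h; rewrite !Pr_EE; apply: EE_le => E sub.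
by case: (boolP (A E)) => a; [rewrite (h E sub a) | rewrite ler0n].
Qed.

Lemma Pr_ge0 (A : pred {set {set 'I_n}}) : 0 <= Pr p A.
Proof.
rewrite -[X in X <= _](EE_const 0) Pr_EE; apply: EE_le => E _; exact: ler0n.
Qed.

Lemma Pr_le1 (A : pred {set {set 'I_n}}) : Pr p A <= 1.
Proof.
rewrite -[X in _ <= X](EE_const 1) Pr_EE; apply: EE_le => E _.
by case: (A E); rewrite ?ler0n.
Qed.

Lemma cheb f s : 0 < s ->
  (forall i E E', E :\: D i = E' :\: D i -> f E' <= f E + 1) ->
  Pr p (fun E => s <= `|f E - EE f|) <= n%:R / s ^+ 2.
Proof.
move=> s0 Lip; rewrite Pr_EE.
apply: (@le_trans _ _ (EE (fun E => (s ^+ 2)^-1 * (f E - EE f) ^+ 2))).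
  apply: EE_le => E _; set x := f E - EE f.
  have s2 : 0 < s ^+ 2 by rewrite exprn_gt0.
  case: (boolP (s <= `|x|)) => h /=.
    rewrite mulrC ler_pdivlMr // mul1r.
    by move: h; rewrite ler_normr => /orP [] h; nra.
  by rewrite mulr_ge0 ?sqr_ge0 // invr_ge0 ltW.
rewrite EE_scale mulrC ler_wpM2r //; first by rewrite invr_ge0 exprn_ge0 // ltW.
exact: var_bound.
Qed.

Lemma diffD i E E' e : E :\: D i = E' :\: D i -> (e \in E) != (e \in E') -> e \in D i.
Proof.
move=> h; apply: contraR => nD; move/setP/(_ e): h.
move: (D i) nD => Di nD; rewrite !finset.in_setD (negbTE nD) /= => ->.
by rewrite eqxx.
Qed.

Lemma Y_lipD k i E E' : E :\: D i = E' :\: D i ->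
  (Y k (E' :&: P) <= (Y k (E :&: P)).+1)%N.
Proof.
move=> h.
have dI e : (e \in E :&: P) != (e \in E' :&: P) -> e \in D i.
  move=> he; apply: (diffD h); move: he; rewrite !finset.in_setI.
  by case: (e \in P); rewrite ?andbT ?andbF.
case: (pickP (fun e => (e \in E :&: P) != (e \in E' :&: P))) => [e he|none].
  have [j _ ej] := D_vertex (dI e he).
  apply: (@Y_lip n k j) => e' he'.
  have [j' j'e ej'] := D_vertex (dI e' he').
  by have -> : j = j' by apply: val_inj; rewrite ej ej'.
have -> : E' :&: P = E :&: P.
  by apply/setP => e; have /negbFE/eqP := none e.
exact: leqnSn.
Qed.

Lemma conc k (eps w : R) : (0 < n)%N -> 0 < eps -> eps^-1 + 1 < w ->
  eps <= Pr p (fun E : {set {set 'I_n}} => (chi E [set: 'I_n]%SET <= k)%N) ->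
  Pr p (fun E : {set {set 'I_n}} => w * Num.sqrt n%:R < (Y k E)%:R) <= (w - (eps^-1 + 1)) ^-2.
Proof.
move=> n0 e0 cw heps.
set c := eps^-1 + 1.
set sn := Num.sqrt n%:R.
have sn0 : 0 < sn by rewrite sqrtr_gt0 ltr0n.
have sn2 : sn ^+ 2 = n%:R by rewrite sqr_sqrtr // ler0n.
pose f E := (Y k (E :&: P))%:R : R.
have Lf i E E' : E :\: D i = E' :\: D i -> f E' <= f E + 1.
  by move=> h; rewrite /f natr1 ler_nat; exact: Y_lipD h.
have fE (E : {set {set 'I_n}}) : E \subset P -> f E = (Y k E)%:R.
  by move=> sub; rewrite /f (finset.setIidPl sub).
set m := EE f.
have ie : eps^-1 * eps = 1 by rewrite mulVf // gt_eqF.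
have ie0 : 0 < eps^-1 by rewrite invr_gt0.
have hm : m < c * sn.
  rewrite ltNge; apply/negP => hm.
  have : eps <= n%:R / (c * sn) ^+ 2.
    apply: (le_trans heps).
    apply: (@le_trans _ _ (Pr p (fun E => c * sn <= `|f E - m|))); last first.
      by apply: (cheb _ Lf); apply: mulr_gt0 => //; rewrite /c; lra.
      apply: Pr_le => E sub hE.
      have hY : (Y k E <= 0)%N.
        rewrite -(cards0 'I_n); apply: Y_le; rewrite finset.setC0.
        apply: col_mono_k hE _; exact: chi_col.
      rewrite fE //; move: hY; rewrite leqn0 => /eqP -> /=; rewrite sub0r normrN.
      by apply: (le_trans hm); exact: ler_norm.
  have -> : n%:R / (c * sn) ^+ 2 = (c ^+ 2)^-1.
    rewrite exprMn sn2; field; apply/andP; split; last by rewrite pnatr_eq0 -lt0n.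
    by rewrite /c; apply: lt0r_neq0; lra.
  have c0 : 0 < c ^+ 2 by rewrite exprn_gt0 // /c; lra.
  rewrite -[X in _ <= X]mul1r ler_pdivlMr //.
  have -> : eps * c ^+ 2 = eps^-1 + 2 + eps by rewrite /c; field; rewrite gt_eqF.
  lra.
have ws : 0 < (w - c) * sn by apply: mulr_gt0 => //; rewrite subr_gt0.
apply: (@le_trans _ _ (Pr p (fun E => (w - c) * sn <= `|f E - m|))).
  apply: Pr_le => E sub hE; rewrite fE //.
  apply: (le_trans _ (ler_norm _)); rewrite -(fE _ sub); move: hE; rewrite -(fE _ sub).
  by move=> hE; nra.
apply: (le_trans (cheb ws Lf)).
rewrite exprMn sn2 le_eqVlt; apply/orP; left; apply/eqP; field.
apply/andP; split; last by rewrite pnatr_eq0 -lt0n.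
by apply: lt0r_neq0; rewrite subr_gt0.
Qed.

End Graph.

Section Graph2.
Variables (R : realType) (n : nat) (p : R).
Hypothesis hp : 0 <= p <= 1.
Local Notation P := (pairs n).
Lemma Pr0 (A : pred {set {set 'I_n}}) :
  (forall E : {set {set 'I_n}}, E \subset P -> ~~ A E) -> Pr p A = 0.
Proof.
move=> h; rewrite Pr_EE -(@EE_const R n p 0); apply: EE_ext => E sub.
by rewrite (negbTE (h E sub)).
Qed.

Lemma Pr_cover (H G B C : pred {set {set 'I_n}}) :
  (forall E : {set {set 'I_n}}, E \subset P -> H E -> [|| G E, B E | C E]) ->
  Pr p H <= Pr p G + Pr p B + Pr p C.
Proof.
move=> h; rewrite !Pr_EE -!(@EE_add R n p); apply: (EE_le hp) => E sub.
rewrite -!natrD ler_nat; move: (h E sub).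
case: (H E) => //=; case: (G E); case: (B E); case: (C E) => // /(_ isT).
by [].
Qed.

Lemma Y_small (E : {set {set 'I_n}}) k (zn : R) : E \subset P -> (0 < k)%N -> (Y k E)%:R <= zn ->
  (chi E [set: 'I_n]%SET <= k + \max_(Z : {set 'I_n} | ((#|Z|%:R : R) <= zn)%R) chi E Z)%N.
Proof.
move=> sub k0 hY; have [Z [hZ eZ]] := Y_wit E k0.
have hc := col_union hZ (chi_col Z sub).
rewrite finset.setUC finset.setUCr in hc.
apply: (leq_trans (chi_le hc)); rewrite leq_add2l.
apply: (@leq_bigmax_cond _ (fun Z : {set 'I_n} => ((#|Z|%:R : R) <= zn)%R) (fun Z => chi E Z)); by rewrite eZ.
Qed.

Lemma per_n (G : R) (Lam : int) (om eps : R) :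
  (0 < n)%N -> 0 < eps ->
  (1/2 <= Pr p (fun E : {set {set 'I_n}} => ((chi E [set: 'I_n]%SET)%:Z <= Lam)%R)) ->
  (forall L : int, 1/2 <= Pr p (fun E : {set {set 'I_n}} => ((chi E [set: 'I_n]%SET)%:Z <= L)%R) -> (Lam <= L)%R) ->
  `|1 - Pr p (fun E : {set {set 'I_n}} => ((\max_(Z : {set 'I_n} | (#|Z|%:R : R) <= om * Num.sqrt n%:R) chi E Z)%:R : R) <= G)| < eps / 4 ->
  `|1 - Pr p (fun E : {set {set 'I_n}} => ((\max_(Z : {set 'I_n} | (#|Z|%:R : R) <= om * Num.sqrt n%:R) chi E Z)%:R : R) <= G)| < 1 / 4 ->
  1 + (eps / 4)^-1 + 3 < om ->
  1 + 4 + ((eps / 4)^-1 + 1) < om ->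
  `|1 - Pr p (fun E : {set {set 'I_n}} => `|(chi E [set: 'I_n]%SET)%:R - Lam%:~R| <= G)| < eps.
Proof.
move=> n0 e0 hL1 hL2 hH1 hH2 om1 om2.
pose Mx := fun E : {set {set 'I_n}} => \max_(Z : {set 'I_n} | (#|Z|%:R : R) <= om * Num.sqrt n%:R) chi E Z.
pose Hp := fun E : {set {set 'I_n}} => ((Mx E)%:R : R) <= G.
have {hH1}hH1 : `|1 - Pr p Hp| < eps / 4 := hH1.
have {hH2}hH2 : `|1 - Pr p Hp| < 1 / 4 := hH2.
have e4 : 0 < eps / 4 by rewrite divr_gt0.
have e4i : 0 < (eps / 4)^-1 by rewrite invr_gt0.
case: Lam hL1 hL2 => k hL1 hL2; last first.
  exfalso; move: hL1; rewrite Pr0; first by lra.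
  by move=> E _; rewrite -ltNge (@lt_le_trans _ _ 0).
have k0 : (0 < k)%N.
  case: (posnP k) => [k0|//]; exfalso; move: hL1; rewrite Pr0; first by lra.
  move=> E _; have := chi_ge1 E [set: 'I_n]%SET n0; rewrite k0; lia.
have hq : 1/2 <= Pr p (fun E : {set {set 'I_n}} => (chi E [set: 'I_n]%SET <= k)%N).
  by move: hL1; rewrite (@Pr_ext R n p _ (fun E : {set {set 'I_n}} => (chi E [set: 'I_n]%SET <= k)%N)).
have hH1' : 1 - eps / 4 < Pr p Hp.
  by move: hH1; rewrite ltr_norml => /andP [_ h]; lra.
have hH2' : 3 / 4 < Pr p Hp.
  by move: hH2; rewrite ltr_norml => /andP [_ h]; lra.
have B1 : Pr p (fun E : {set {set 'I_n}} => Hp E && (k%:R + G < (chi E [set: 'I_n]%SET)%:R)) < eps / 4.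
  have h3 : ((1 / 2 : R)^-1 + 1) = 3 by rewrite invf_div divr1; lra.
  have h12 : (0 : R) < 1 / 2 by lra.
  have hw : (1 / 2 : R)^-1 + 1 < om by rewrite h3; lra.
  have hc := @conc R n p hp k (1/2) om n0 h12 hw hq.
  rewrite h3 in hc.
  apply: (@le_lt_trans _ _ (Pr p (fun E : {set {set 'I_n}} => om * Num.sqrt n%:R < (Y k E)%:R))).
    apply: (Pr_le hp) => E sub /andP [hE hk].
    rewrite ltNge; apply/negP => hY.
    have := Y_small sub k0 hY; rewrite -(ler_nat R) natrD => hX.
    have hE' : ((\max_(Z : {set 'I_n} | (#|Z|%:R : R) <= om * Num.sqrt n%:R) chi E Z)%:R : R) <= G := hE.
    lra.
  apply: (le_lt_trans hc).
  apply: inv_sq_small => //; lra.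
have B2 : Pr p (fun E : {set {set 'I_n}} => (chi E [set: 'I_n]%SET)%:R < k%:R - G) < eps / 4.
  case: (pickP (fun E => (E \in powerset P) && ((chi E [set: 'I_n]%SET)%:R < k%:R - G)))
    => [E0 /andP [E0P hE0]| none]; last first.
    rewrite Pr0 // => E sub; have := none E; rewrite powersetE sub /= => ->.
    by [].
  pose K := \max_(E | (E \in powerset P) && ((chi E [set: 'I_n]%SET)%:R < k%:R - G))
              chi E [set: 'I_n]%SET.
  have hK (E : {set {set 'I_n}}) : E \subset P -> (chi E [set: 'I_n]%SET)%:R < k%:R - G ->
      (chi E [set: 'I_n]%SET <= K)%N.
    move=> sub h; apply: (@leq_bigmax_cond _
      (fun E => (E \in powerset P) && ((chi E [set: 'I_n]%SET)%:R < k%:R - G))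
      (fun E => chi E [set: 'I_n]%SET)).
    by rewrite powersetE sub h.
  have K1 : (0 < K)%N.
    apply: (leq_trans (chi_ge1 E0 [set: 'I_n]%SET n0)); apply: hK => //.
    by rewrite -powersetE.
  have KG : (K%:R : R) < k%:R - G.
    rewrite /K; apply: (big_ind (fun x : nat => (x%:R : R) < k%:R - G)).
    - by apply: le_lt_trans hE0; rewrite ler0n.
    - by move=> x y hx hy; rewrite /maxn; case: ifP.
    - by move=> E /andP [].
  apply: (@le_lt_trans _ _ (Pr p (fun E : {set {set 'I_n}} => (chi E [set: 'I_n]%SET <= K)%N))).
    by apply: (Pr_le hp) => E sub hE; exact: hK.
  rewrite ltNge; apply/negP => hq2.
  have h4 : ((1 / 4 : R)^-1) = 4 by rewrite invf_div divr1.
  have hw2 : (eps / 4)^-1 + 1 < om by lra.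
  have hc := @conc R n p hp K (eps / 4) om n0 e4 hw2 hq2.
  have hc' : Pr p (fun E : {set {set 'I_n}} => om * Num.sqrt n%:R < (Y K E)%:R) < 1 / 4.
    apply: (le_lt_trans hc).
    by apply: inv_sq_small => //; rewrite h4; lra.
  have cov : Pr p Hp <= Pr p (fun E : {set {set 'I_n}} => ((chi E [set: 'I_n]%SET)%:Z <= Posz k - 1)%R)
        + Pr p (fun E : {set {set 'I_n}} => om * Num.sqrt n%:R < (Y K E)%:R) + Pr p (fun _ : {set {set 'I_n}} => false).
    apply: Pr_cover => E sub hE.
    case: (ltP (om * Num.sqrt n%:R) (Y K E)%:R) => hY; first by rewrite orbT.
    apply/orP; left.
    have := Y_small sub K1 hY; rewrite -(ler_nat R) natrD => hX.
    have hE' : ((\max_(Z : {set 'I_n} | (#|Z|%:R : R) <= om * Num.sqrt n%:R) chi E Z)%:R : R) <= G := hE.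
    have : ((chi E [set: 'I_n]%SET)%:R : R) < k%:R by lra.
    rewrite ltr_nat => hlt; clear -hlt; lia.
  have p0 : Pr p (fun _ : {set {set 'I_n}} => false) = 0 by rewrite Pr0.
  have lt12 : Pr p (fun E : {set {set 'I_n}} => ((chi E [set: 'I_n]%SET)%:Z <= Posz k - 1)%R) < 1 / 2.
    rewrite ltNge; apply/negP => h; have := hL2 _ h => hk; clear -hk; lia.
  lra.
have cov : Pr p Hp <= Pr p (fun E : {set {set 'I_n}} => `|(chi E [set: 'I_n]%SET)%:R - (Posz k)%:~R| <= G)
   + Pr p (fun E : {set {set 'I_n}} => Hp E && (k%:R + G < (chi E [set: 'I_n]%SET)%:R))
   + Pr p (fun E : {set {set 'I_n}} => (chi E [set: 'I_n]%SET)%:R < k%:R - G).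
  apply: Pr_cover => E sub hE; rewrite hE /=.
  case: (ltP (k%:R + G) (chi E [set: 'I_n]%SET)%:R) => h1; first by rewrite orbT.
  case: (ltP (chi E [set: 'I_n]%SET)%:R (k%:R - G)) => h2; first by rewrite !orbT.
  apply/orP; left; rewrite -pmulrn ler_distl; apply/andP; split; lra.
have le1 := Pr_le1 hp (fun E => `|(chi E [set: 'I_n]%SET)%:R - (Posz k)%:~R| <= G).
rewrite ger0_norm; last by rewrite subr_ge0.
lra.
Qed.


End Graph2.

Unset Implicit Arguments.
Set Strict Implicit.

Theorem lemma5 (R : realType) (p : nat -> R) (omega : nat -> R)
  (Gamma : R -> nat -> R -> R) (Lambda : nat -> int) :
  (forall n, 0 <= p n <= 1) ->
  (omega @ \oo --> +oo)%classic ->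
  let z := fun n : nat => omega n * Num.sqrt (n%:R : R) in
  whp p (fun n E =>
    ((\max_(Z : {set 'I_n} | (#|Z|%:R : R) <= z n) chi E Z)%:R : R)
      <= Gamma (z n) n (p n)) ->
  (forall n, (1 / 2 : R) <= Pr (p n) (fun E => ((chi E [set: 'I_n]%SET)%:Z <= Lambda n)%R)
     /\ forall L : int, (1 / 2 : R) <= Pr (p n) (fun E => ((chi E [set: 'I_n]%SET)%:Z <= L)%R) ->
        (Lambda n <= L)%R) ->
  whp p (fun n E =>
    `|(chi E [set: 'I_n]%SET)%:R - (Lambda n)%:~R| <= Gamma (z n) n (p n)).
Proof.
move=> hp0 hom z Hw HL.
move: Hw; rewrite /whp => Hw.
apply/cvgrPdist_lt => eps e0.
have e4 : 0 < eps / 4 by rewrite divr_gt0.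
have q4 : (0 : R) < 1 / 4 by rewrite divr_gt0.
have hA := (cvgrPdist_lt _ _).1 Hw (eps / 4) e4.
have hB := (cvgrPdist_lt _ _).1 Hw (1 / 4) q4.
have hC := (cvgryPgt _).1 hom (1 + (eps / 4)^-1 + 3).
have hD := (cvgryPgt _).1 hom (1 + 4 + ((eps / 4)^-1 + 1)).
have {hA}hA := hA _. have {hB}hB := hB _. have {hC}hC := hC _. have {hD}hD := hD _.
have hE := nbhs_infty_gt 0.
near=> n.
apply: (@per_n _ n (p n) (hp0 n) (Gamma (z n) n (p n)) (Lambda n) (omega n) eps) => //.
- by near: n.
- exact: (HL n).1.
- exact: (HL n).2.
- near: n. exact: hA.
- near: n; exact: hB.
- near: n; exact: hC.
- near: n; exact: hD.
Unshelve. all: end_near.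
Qed.
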